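(* Let $\mathbb{G}$ be a connected undirected graph on $m$ agents with neighbor sets $\mathcal{N}_i$. For each agent $i$, let $f_i:\mathbb{R}^n\to\mathbb{R}$, $A_i\in\mathbb{R}^{n_i\times n}$, $b_i\in\operatorname{image}A_i$, and let $P_i$ be the orthogonal projection matrix onto $\ker A_i$. Suppose each $f_i$ is convex and continuously differentiable with Lipschitz gradient; $\operatorname{rank}(\mathrm{col}\{A_1,\dots,A_m\})<n$; the set $\{x: A_ix=b_i\ \forall i\}$ is non-empty; and a (possibly non-unique) minimizer of $F(x)=\sum_{i=1}^m f_i(x)$ subject to $A_ix=b_i$ for all $i$ exists. Consider the dynamics $\dot x_i=-P_i\big(\nabla f_i(x_i)+\sum_{j\in\mathcal{N}_i}(x_i-x_j)+y_i\big)$, $\dot y_i=\sum_{j\in\mathcal{N}_i}(x_i-x_j)$, $y_i(0)=0$, $A_ix_i(0)=b_i$ (equivalent to the integral-feedback update $\dot x_i=-P_i(\nabla f_i(x_i)+\sum_{j\in\mathcal{N}_i}(x_i-x_j)+\int_0^t\sum_{j\in\mathcal{N}_i}(x_i-x_j))$). Call $(x_1^*,\dots,x_m^*,y_1^*,\dots,y_m^* )$ an equilibrium point if $A_ix_i^*=b_i$ for all $i$, $\sum_{i=1}^m y_i^*=0$, and for all $i$: $$0=-P_i\Big(\nabla f_i(x_i^* )+\sum_{j\in\mathcal{N}_i}(x_i^*-x_j^* )+y_i^*\Big),\qquad 0=\sum_{j\in\mathcal{N}_i}(x_i^*-x_j^* ).$$ Then an equilibrium point exists. Furthermore, for every equilibrium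 point there is $x^*\in\mathbb{R}^n$ with $x_i^*=x^*$ for all $i=1,\dots,m$, and $x^*$ minimizes $\sum_{i=1}^m f_i(x)$ subject to $A_ix=b_i$, $i=1,\dots,m$.
   Context: $\nabla f_i$ denotes the gradient of $f_i$. Neighbor relations are symmetric: $j\in\mathcal{N}_i$ iff $i\in\mathcal{N}_j$. The conditions $A_ix_i^*=b_i$ and $\sum_i y_i^*=0$ reflect invariants of the dynamics: $A_ix_i(t)=b_i$ for all $t$, and $y(t)$ stays in the image of the graph Laplacian (Kronecker) $L\otimes I_n$. *)

(* Defs.v *)
From HB Require Import structures.
From mathcomp Require Import all_boot all_order all_algebra.
From mathcomp Require Import all_classical all_reals all_analysis.
Set Implicit Arguments. Unset Strict Implicit. Unset Printing Implicit Defensive.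
Import Order.TTheory GRing.Theory Num.Theory.
Import numFieldNormedType.Exports.
Local Open Scope ring_scope.

Definition convex_fun {R : realType} {n : nat} (f : 'cV[R]_n -> R) : Prop :=
  forall (x y : 'cV[R]_n) (t : R), 0 <= t -> t <= 1 ->
    f (t *: x + (1 - t) *: y) <= t * f x + (1 - t) * f y.

Definition is_gradient {R : realType} {n : nat}
  (f : 'cV[R]_n -> R) (g : 'cV[R]_n -> 'cV[R]_n) : Prop :=
  forall x : 'cV[R]_n, differentiable f x /\
    forall h : 'cV[R]_n, 'd f x h = ((g x)^T *m h) 0 0.

(* g is Lipschitz (w.r.t. the library norm on 'cV_n; all norms on R^n are
   equivalent so this is the usual notion). *)
Definition lipschitz_map {R : realType} {n : nat} (g : 'cV[R]_n -> 'cV[R]_n) : Prop :=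
  exists L : R, forall x y : 'cV[R]_n, `|g x - g y| <= L * `|x - y|.

Definition is_orth_proj_ker {R : realType} {p n : nat}
  (A : 'M[R]_(p, n)) (P : 'M[R]_n) : Prop :=
  [/\ P^T = P, P *m P = P, A *m P = 0 &
      forall x : 'cV[R]_n, A *m x = 0 -> P *m x = x].

(* Undirected connected graph on the agents 'I_m, given by a symmetric
   irreflexive adjacency relation; N_i = [pred j | e i j]. *)
Definition undirected_connected {m : nat} (e : rel 'I_m) : Prop :=
  [/\ irreflexive e, symmetric e & forall i j, connect e i j].

Definition feasible {R : realType} {m n : nat} {ni : 'I_m -> nat}
  (A : forall i, 'M[R]_(ni i, n)) (b : forall i, 'cV[R]_(ni i))
  (x : 'cV[R]_n) : Prop :=
  forall i, A i *m x = b i.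

Definition is_constrained_minimizer {R : realType} {m n : nat} {ni : 'I_m -> nat}
  (f : 'I_m -> 'cV[R]_n -> R)
  (A : forall i, 'M[R]_(ni i, n)) (b : forall i, 'cV[R]_(ni i))
  (x : 'cV[R]_n) : Prop :=
  feasible A b x /\
  forall z, feasible A b z -> \sum_(i < m) f i x <= \sum_(i < m) f i z.

Definition is_equilibrium {R : realType} {m n : nat} {ni : 'I_m -> nat}
  (e : rel 'I_m) (g : 'I_m -> 'cV[R]_n -> 'cV[R]_n)
  (A : forall i, 'M[R]_(ni i, n)) (b : forall i, 'cV[R]_(ni i))
  (P : 'I_m -> 'M[R]_n) (x y : 'I_m -> 'cV[R]_n) : Prop :=
  [/\ forall i, A i *m x i = b i,
      \sum_(i < m) y i = 0,
      forall i, 0 = - (P i *m (g i (x i) + \sum_(j < m | e i j) (x i - x j) + y i))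
    & forall i, 0 = \sum_(j < m | e i j) (x i - x j)].

(* Main.v *)
Require Import Defs.
From HB Require Import structures.
From mathcomp Require Import all_boot all_order all_algebra.
From mathcomp Require Import all_classical all_reals all_analysis.
From mathcomp Require Import ring lra.
Import Order.TTheory GRing.Theory Num.Theory.
Import numFieldNormedType.Exports.
Set Implicit Arguments. Unset Strict Implicit.
Local Open Scope ring_scope.
Local Open Scope classical_set_scope.

Lemma dir_cvg (R : realType) n (f : 'cV[R]_n -> R) g x d : is_gradient f g ->
  (fun t : R => t^-1 * (f (t *: d + x) - f x)) @ 0^'+ --> ((g x)^T *m d) 0 0.
Proof.
move=> /(_ x) [dif dfe].
have := @diff_derivable _ _ _ _ _ d dif.
rewrite /derivable => cv.
rewrite -dfe -deriveE //.
rewrite /derive.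
move=> A /cv /nbhs_ballP [e e0 eA].
apply/nbhs_ballP; exists e => // y ye y0.
by apply: eA => //; rewrite gt_eqF.
Qed.

Lemma lim_le_right (R : realType) (phi : R -> R) l c : phi @ 0^'+ --> l ->
  (forall t, 0 < t -> t < 1 -> phi t <= c) -> l <= c.
Proof.
move=> cv H.
have <- : lim (phi @ 0^'+) = l by apply: cvg_lim.
apply: limr_le; first by apply/cvg_ex; exists l.
near=> t; apply: H.
  by near: t; exact: nbhs_right_gt.
by near: t; apply: nbhs_right_lt.
Unshelve. all: by end_near.
Qed.

Lemma lim_ge_right (R : realType) (phi : R -> R) l c : phi @ 0^'+ --> l ->
  (forall t, 0 < t -> t < 1 -> c <= phi t) -> c <= l.
Proof.
move=> cv H.
have <- : lim (phi @ 0^'+) = l by apply: cvg_lim.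
apply: limr_ge; first by apply/cvg_ex; exists l.
near=> t; apply: H.
  by near: t; exact: nbhs_right_gt.
by near: t; apply: nbhs_right_lt.
Unshelve. all: by end_near.
Qed.

Lemma conv_ineq (R : realType) n (f : 'cV[R]_n -> R) g x z :
  convex_fun f -> is_gradient f g -> f x + ((g x)^T *m (z - x)) 0 0 <= f z.
Proof.
move=> cf gf.
rewrite addrC -lerBrDr.

apply: (lim_le_right (dir_cvg (x:=x) (d:=z - x) gf)) => t t0 t1.

rewrite ler_pdivrMl // lerBlDr.
have -> : t *: (z - x) + x = t *: z + (1 - t) *: x.
  rewrite scalerBr scalerBl scale1r; rewrite -!addrA; congr (_ + _).
  by rewrite addrC.
have H := cf z x t (ltW t0) (ltW t1).
apply: le_trans H _.
rewrite mulrBr mulrBl mul1r; lra.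
Qed.

Lemma consensus (R : realType) m n (e : rel 'I_m) (x : 'I_m -> 'cV[R]_n) :
  undirected_connected e -> (forall i, 0 = \sum_(j < m | e i j) (x i - x j)) ->
  forall i j, x i = x j.
Proof.
case=> _ _ econ H i j; apply/matrixP => k c.
pose F a := x a k c.
case: (@arg_maxP _ _ _ i predT F isT) => i0 _ Hmax.
have step : forall a b, F a = F i0 -> e a b -> F b = F i0.
  move=> a b Fa eab.
  have := congr1 (fun M : 'cV[R]_n => M k c) (H a).
  rewrite summxE mxE.
  under eq_bigr do rewrite !mxE.
  move=> /esym /psumr_eq0P Hs.
  have /Hs : forall l, e a l -> 0 <= x a k c - x l k c.
    move=> l _; rewrite subr_ge0; rewrite /F in Fa Hmax; rewrite Fa; exact: Hmax.
  move=> /(_ b eab) /eqP; rewrite subr_eq0 => /eqP.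
  by rewrite /F => <-.
have gen : forall p s, path e s p -> F s = F i0 -> F (last s p) = F i0.
  elim=> [|b p IH] s //= /andP [esb pth] Fs; exact: IH _ pth (step _ _ Fs esb).
have all_eq : forall a, F a = F i0.
  by move=> a; have /connectP [p pth ->] := econ i0 a; apply: gen.
by have := all_eq i; have := all_eq j; rewrite /F => -> ->.
Qed.

Definition ip (R : realType) n (u v : 'cV[R]_n) : R := (u^T *m v) 0 0.

Lemma ip_suml (R : realType) n (I : finType) (P : pred I) (u : I -> 'cV[R]_n) v :
  ip (\sum_(i | P i) u i) v = \sum_(i | P i) ip (u i) v.
Proof. by rewrite /ip linear_sum /= mulmx_suml summxE. Qed.

Lemma ip_addl (R : realType) n (u w v : 'cV[R]_n) : ip (u + w) v = ip u v + ip w v.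
Proof. by rewrite /ip linearD /= mulmxDl mxE. Qed.

Lemma ip_oppr (R : realType) n (u v : 'cV[R]_n) : ip u (- v) = - ip u v.
Proof. by rewrite /ip mulmxN mxE. Qed.

Lemma ip_oppl (R : realType) n (u v : 'cV[R]_n) : ip (- u) v = - ip u v.
Proof. by rewrite /ip linearN /= mulNmx mxE. Qed.

Lemma ip_proj (R : realType) p n (A : 'M[R]_(p, n)) P u v :
  is_orth_proj_ker A P -> A *m v = 0 -> ip u v = ip (P *m u) v.
Proof.
case=> Ps _ _ Pk Av; rewrite /ip trmx_mul Ps -mulmxA Pk //.
Qed.

Lemma col_mulmx (R : realType) a b c (A : 'M[R]_(a, b)) (B : 'M[R]_(b, c)) k :
  col k (A *m B) = A *m col k B.
Proof. by rewrite !colE mulmxA. Qed.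

Lemma kkt (R : realType) p n (M : 'M[R]_(p, n)) (G : 'cV[R]_n) :
  (forall d, M *m d = 0 -> ip G d = 0) -> exists D : 'rV[R]_p, G^T = D *m M.
Proof.
move=> H; apply/submxP; rewrite submxE; apply/eqP/matrixP => r k.
rewrite [r]ord1 [RHS]mxE.
have Mc : M *m col k (cokermx M) = 0 by rewrite -col_mulmx mulmx_coker; apply/matrixP => ? ?; rewrite !mxE.
by have := H _ Mc; rewrite /ip -col_mulmx mxE => ->.
Qed.

Lemma ker_blocks (R : realType) m n (ni : 'I_m -> nat) (A : forall i, 'M[R]_(ni i, n)) (d : 'cV[R]_n) :
  \mxcol_(i < m) A i *m d = 0 -> forall i, A i *m d = 0.
Proof.
move=> H i; apply/matrixP => r c.
have E : (\mxcol_(i < m) A i *m d) (tagnat.Rank i r) c = (A i *m d) r c.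
  rewrite !mxE; apply: eq_bigr => l _.
  by rewrite -(mxcolK A i) !mxE.
by rewrite -E H !mxE.
Qed.

Theorem lemma1 (R : realType) (m n : nat) (e : rel 'I_m)
  (ni : 'I_m -> nat)
  (f : 'I_m -> 'cV[R]_n -> R) (g : 'I_m -> 'cV[R]_n -> 'cV[R]_n)
  (A : forall i : 'I_m, 'M[R]_(ni i, n)) (b : forall i : 'I_m, 'cV[R]_(ni i))
  (P : 'I_m -> 'M[R]_n) :
  undirected_connected e ->
  (forall i, exists z : 'cV[R]_n, A i *m z = b i) ->
  (forall i, is_orth_proj_ker (A i) (P i)) ->
  (forall i, convex_fun (f i)) ->
  (forall i, is_gradient (f i) (g i)) ->
  (forall i, continuous (g i)) ->
  (forall i, lipschitz_map (g i)) ->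
  (\rank (\mxcol_(i < m) A i) < n)%N ->
  (exists x : 'cV[R]_n, feasible A b x) ->
  (exists x : 'cV[R]_n, is_constrained_minimizer f A b x) ->
  (exists x y : 'I_m -> 'cV[R]_n, is_equilibrium e g A b P x y) /\
  (forall x y : 'I_m -> 'cV[R]_n, is_equilibrium e g A b P x y ->
     exists xs : 'cV[R]_n,
       (forall i, x i = xs) /\ is_constrained_minimizer f A b xs).
Proof.
move=> conn _ Pp cf gr _ _ _ _ [xm [feas_xm minxm]].
split.
  pose G := \sum_i g i xm.
  have orth : forall d, \mxcol_(i < m) A i *m d = 0 -> ip G d = 0.
    move=> d Md; have Ad := ker_blocks Md.
    have key : forall s, (forall i, A i *m s = 0) -> 0 <= ip G s.
      move=> s As.
      rewrite /G ip_suml.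
      apply: (@lim_ge_right _ (fun t => \sum_i t^-1 * (f i (t *: s + xm) - f i xm))).
        apply: (@cvg_big _ _ +%R 0 predT add_continuous) => // i _.
        exact: dir_cvg (gr i).
      move=> t t0 _.
      rewrite -mulr_sumr sumrB; apply: mulr_ge0; first by rewrite invr_ge0 ltW.
      rewrite subr_ge0; apply: minxm => i.
      by rewrite mulmxDr -scalemxAr As scaler0 add0r feas_xm.
    have h1 := key d Ad.
    have h2 := key (- d) (fun i => etrans (mulmxN _ _) (etrans (congr1 -%R (Ad i)) (oppr0 _))).
    rewrite ip_oppr oppr_ge0 in h2.
    by apply/eqP; rewrite eq_le h2 h1.
  have [D HD] := kkt orth.
  pose lam i := (submxrow D i)^T.
  have HG : G = \sum_i (A i)^T *m lam i.
    apply: trmx_inj; rewrite HD -{1}[D]submxrowK mul_mxrow_mxcol linear_sum /=.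
    by apply: eq_bigr => i _; rewrite trmx_mul !trmxK.
  exists (fun _ => xm), (fun i => - g i xm + (A i)^T *m lam i).
  split.
  - exact: feas_xm.
  - by rewrite big_split /= sumrN -HG addNr.
  - move=> i; rewrite big1 ?addr0; last by move=> j _; rewrite subrr.
    rewrite addNKr mulmxA.
    have -> : P i *m (A i)^T = 0.
      by case: (Pp i) => Ps _ AP _; rewrite -Ps -trmx_mul AP trmx0.
    by rewrite mul0mx oppr0.
  - by move=> i; rewrite big1 // => j _; rewrite subrr.
move=> x y [Ax Sy Eq Cons].
have cons := consensus conn Cons.
case: (pickP (@predT 'I_m)) => [i0 _|nI]; last first.
  exists xm; split; first by move=> i; have := nI i.
  exact: (conj feas_xm minxm).
exists (x i0); split; first by move=> i; apply: cons.
have Axs : feasible A b (x i0) by move=> i; rewrite -(cons i i0).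
split => // z fz.
have Pzero : forall i, P i *m (g i (x i0) + y i) = 0.
  move=> i; have := Eq i; rewrite big1 ?addr0; last by move=> j _; rewrite (cons i j) subrr.
  rewrite (cons i i0) => /esym /eqP; rewrite oppr_eq0 => /eqP.
  done.
have w0 : forall i, A i *m (z - x i0) = 0 by move=> i; rewrite mulmxBr fz Axs subrr.
have Hs : \sum_i ip (g i (x i0)) (z - x i0) = 0.
  have : \sum_i ip (g i (x i0) + y i) (z - x i0) = 0.
    rewrite big1 // => i _.
    by rewrite (@ip_proj _ _ _ (A i) (P i) _ _ (Pp i) (w0 i)) Pzero /ip trmx0 mul0mx mxE.
  have Ey : \sum_i ip (y i) (z - x i0) = 0.
    by rewrite -ip_suml Sy /ip trmx0 mul0mx mxE.
  under eq_bigr do rewrite ip_addl.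
  by rewrite big_split /= Ey addr0.
have -> : \sum_(i < m) f i (x i0) =
    \sum_(i < m) (f i (x i0) + ip (g i (x i0)) (z - x i0)).
  by rewrite big_split /= Hs addr0.
apply: ler_sum => i _.
exact: (conv_ineq (x i0) z (cf i) (gr i)).
Qed.
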